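(* Let $\beta_1,\dots,\beta_N\in\mathbb R$ satisfy $(d-1)\sum_i\beta_i^2+(\sum_i\beta_i)^2=1$. Then the map $T_\beta$ is a quantum channel whose Choi matrix is $C_\beta$.
   Context: Fix $d\ge2$, $N\ge1$. For a permutation $\sigma$ of $\{0,\dots,n-1\}$, $\Pi_\sigma(v_0\otimes\cdots\otimes v_{n-1})=v_{\sigma^{-1}(0)}\otimes\cdots\otimes v_{\sigma^{-1}(n-1)}$ on $(\mathbb C^d)^{\otimes n}$. On $(\mathbb C^d)^{\otimes(N+1)}$ (factors $0,\dots,N$), $\Pi_\sigma^\Gamma$ is the partial transpose on factor $0$ and $\Sigma_{a,b}=\{\sigma:\sigma(0)=a,\sigma(b)=0\}$. Define $C_\beta=\frac{d}{\binom{N+d-1}{N}}\frac{N+d-1}{N}\sum_{1\le a,b\le N}\sum_{\sigma\in\Sigma_{a,b}}\frac{\beta_a\beta_b}{(N-1)!}\Pi_\sigma^\Gamma$. Let $P_\beta=\frac1{N!}\sum_{\sigma}\beta_{\sigma(0)+1}\Pi_\sigma$, summed over permutations $\sigma$ of $\{0,\dots,N-1\}$ (operators on $(\mathbb C^d)^{\otimes N}$), and $T_\beta(\rho)=\frac{dN(N+d-1)}{\binom{N+d-1}{N}}P_\beta(\rho\otimes I^{\otimes(N-1)})P_\beta^{\mathsf T}$, with ${}^{\mathsf T}$ the transpose in the standard basis. The Choi matrix of $T$ is $C_T=\sum_{i,j}|i\rangle\langle j|\otimes T(|i\rangle\langle j|)$; a quantum channel is a completely positive trace-preserving linear map. *)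

(* Defs.v *)
(* Complex scalars: an arbitrary numClosedFieldType C
   (e.g. C = R[i]); "real" numbers are the elements x with x \is Num.real. *)
From mathcomp Require Import all_boot all_order all_algebra all_fingroup.
From mathcomp Require Import mxtens.
Set Implicit Arguments. Unset Strict Implicit. Unset Printing Implicit Defensive.
Import Order.TTheory GRing.Theory Num.Theory.
Local Open Scope ring_scope.

Section QI.
Variable C : numClosedFieldType.
Variable d : nat.

(** Computational basis of (C^d)^{(x)n}: multi-indices x : {ffun 'I_n -> 'I_d},
    x k being the basis index of tensor factor k. *)
Definition midx (n : nat) := {ffun 'I_n -> 'I_d}.

(** Operators on (C^d)^{(x)n}, as square matrices indexed (via enum_rank) by
    the multi-indices. *)
Definition Op (n : nat) := 'M[C]_#|{: midx n}|.

Definition ent n (A : Op n) (y x : midx n) : C := A (enum_rank y) (enum_rank x).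

Definition mkop n (f : midx n -> midx n -> C) : Op n :=
  \matrix_(i, j) f (enum_val i) (enum_val j).

(** Pi_sigma (v_0 (x) ... (x) v_{n-1}) = v_{sigma^-1 0} (x) ... (x) v_{sigma^-1 (n-1)},
    i.e. Pi_sigma |x> = |x o sigma^-1>. *)
Definition Pi n (s : 'S_n) : Op n :=
  mkop (fun y x => (y == [ffun k => x ((s^-1)%g k)])%:R).

(** partial transpose on tensor factor 0 (of n.+1 factors) *)
Definition ptrans0 n (A : Op n.+1) : Op n.+1 :=
  mkop (fun y x => ent A [ffun k => if k == ord0 then x ord0 else y k]
                         [ffun k => if k == ord0 then y ord0 else x k]).

Definition mtail n (x : midx n.+1) : midx n := [ffun k => x (lift ord0 k)].

(** A (x) B, with A acting on factor 0 and B on factors 1..n *)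
Definition tens0 n (A : 'M[C]_d) (B : Op n) : Op n.+1 :=
  mkop (fun y x => A (y ord0) (x ord0) * ent B (mtail y) (mtail x)).

Definition choi n (T : 'M[C]_d -> Op n) : Op n.+1 :=
  \sum_(i < d) \sum_(j < d) tens0 (delta_mx i j) (T (delta_mx i j)).

(** C_beta (beta_1..beta_N is beta 0 .. beta (N-1); paper index a <-> a+1) *)
Definition Cbeta N (beta : 'I_N -> C) : Op N.+1 :=
  (d%:R / ('C(N + d - 1, N))%:R * ((N + d - 1)%:R / N%:R)) *:
  \sum_(a < N) \sum_(b < N)
     \sum_(s : 'S_N.+1 | (s ord0 == lift ord0 a) && (s (lift ord0 b) == ord0))
        (beta a * beta b / (N.-1)`!%:R) *: ptrans0 (Pi s).

(** P_beta = 1/N! sum_sigma beta_{sigma(0)+1} Pi_sigma ; o is the factor 0 *)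
Definition Pbeta N (hN : (0 < N)%N) (beta : 'I_N -> C) : Op N :=
  (N`!%:R)^-1 *: \sum_(s : 'S_N) beta (s (Ordinal hN)) *: Pi s.

(** rho (x) I^{(x)(N-1)}, rho on factor 0 *)
Definition ampI N (hN : (0 < N)%N) (rho : 'M[C]_d) : Op N :=
  let o := Ordinal hN in
  mkop (fun y x => rho (y o) (x o) *
                   [forall k : 'I_N, (k != o) ==> (y k == x k)]%:R).

Definition Tbeta N (hN : (0 < N)%N) (beta : 'I_N -> C) (rho : 'M[C]_d) : Op N :=
  ((d * N * (N + d - 1))%:R / ('C(N + d - 1, N))%:R) *:
  (Pbeta hN beta *m ampI hN rho *m (Pbeta hN beta)^T).

End QI.

Arguments Tbeta {C} d {N} hN beta rho.
Arguments Cbeta {C} d {N} beta.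
Arguments choi {C d n} T.

Definition adjmx (C : numClosedFieldType) m n (A : 'M[C]_(m, n)) : 'M[C]_(n, m) :=
  (map_mx Num.conj A)^T.

Definition psd (C : numClosedFieldType) n (A : 'M[C]_n) : Prop :=
  adjmx A = A /\ forall v : 'cV[C]_n, 0 <= (adjmx v *m A *m v) 0 0.

(** id_k (x) T applied to X on C^k (x) C^m (index (a,i) |-> a*m+i) *)
Definition ampl (C : numClosedFieldType) m n k (T : 'M[C]_m -> 'M[C]_n)
    (X : 'M[C]_(k * m)) : 'M[C]_(k * n) :=
  \matrix_(p, q)
    T (\matrix_(i, j) X (mxtens_index ((mxtens_unindex p).1, i))
                        (mxtens_index ((mxtens_unindex q).1, j)))
      (mxtens_unindex p).2 (mxtens_unindex q).2.

Definition linear_map (C : numClosedFieldType) m n (T : 'M[C]_m -> 'M[C]_n) :=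
  forall (a : C) (X Y : 'M[C]_m), T (a *: X + Y) = a *: T X + T Y.

Definition completely_positive (C : numClosedFieldType) m n
    (T : 'M[C]_m -> 'M[C]_n) :=
  forall (k : nat) (X : 'M[C]_(k * m)), psd X -> psd (ampl T X).

Definition trace_preserving (C : numClosedFieldType) m n
    (T : 'M[C]_m -> 'M[C]_n) := forall X : 'M[C]_m, \tr (T X) = \tr X.

Definition quantum_channel (C : numClosedFieldType) m n
    (T : 'M[C]_m -> 'M[C]_n) :=
  [/\ linear_map T, completely_positive T & trace_preserving T].

(* Main.v *)
Require Import Defs.
From mathcomp Require Import all_boot all_order all_algebra all_fingroup.
From mathcomp Require Import mxtens ring zify.
Set Implicit Arguments. Unset Strict Implicit. Unset Printing Implicit Defensive.
Import Order.TTheory GRing.Theory Num.Theory.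
Local Open Scope ring_scope.

Section Basic.
Variable C : numClosedFieldType.
Variable d : nat.
Local Notation midx := (midx d).
Local Notation Op := (@Op C d).
Local Notation ent := (@ent C d).

Lemma ent_mkop n (f : midx n -> midx n -> C) y x : ent (mkop f) y x = f y x.
Proof. by rewrite /ent /mkop mxE !enum_rankK. Qed.

Lemma op_ext n (A B : Op n) : (forall y x, ent A y x = ent B y x) -> A = B.
Proof.
move=> H; apply/matrixP => i j; have := H (enum_val i) (enum_val j).
by rewrite /ent !enum_valK.
Qed.

Lemma ent_add n (A B : Op n) y x : ent (A + B) y x = ent A y x + ent B y x.
Proof. by rewrite /ent mxE. Qed.

Lemma ent_scale n a (A : Op n) y x : ent (a *: A) y x = a * ent A y x.
Proof. by rewrite /ent mxE. Qed.

Lemma ent_sum n I (r : seq I) (P : pred I) (F : I -> Op n) y x :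
  ent (\sum_(i <- r | P i) F i) y x = \sum_(i <- r | P i) ent (F i) y x.
Proof. by rewrite /ent summxE. Qed.

Lemma ent_mul n (A B : Op n) y x :
  ent (A *m B) y x = \sum_z ent A y z * ent B z x.
Proof.
rewrite /ent mxE (reindex (@enum_rank _)) //.
by exists enum_val => z _; rewrite ?enum_rankK ?enum_valK.
Qed.

Lemma ent_tr n (A : Op n) y x : ent A^T y x = ent A x y.
Proof. by rewrite /ent mxE. Qed.

Lemma ent_trace n (A : Op n) : \tr A = \sum_y ent A y y.
Proof.
rewrite /mxtrace (reindex (@enum_rank _)) //.
by exists enum_val => z _; rewrite ?enum_rankK ?enum_valK.
Qed.

End Basic.

Section Perms.

Lemma sum_lift_perm (R : Type) (idx : R) (op : Monoid.com_law idx) n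
    (i j : 'I_n.+1) (F : 'S_n.+1 -> R) :
  \big[op/idx]_(s : 'S_n.+1 | s i == j) F s =
  \big[op/idx]_(p : 'S_n) F (lift_perm i j p).
Proof.
rewrite (reindex (lift_perm i j)); last first.
  pose ulsf i (s : 'S_n.+1) k := odflt k (unlift (s i) (s (lift i k))).
  have ulsfK i' (s : 'S_n.+1) k: lift (s i') (ulsf i' s k) = s (lift i' k).
    rewrite /ulsf; have:= neq_lift i' k.
    by rewrite -(can_eq (permK s)) => /unlift_some[] ? ? ->.
  have inj_ulsf: injective (ulsf i _).
    move=> s; apply: can_inj (ulsf (s i) s^-1%g) _ => k'.
    by rewrite {1}/ulsf ulsfK !permK liftK.
  exists (fun s => perm (inj_ulsf s)) => [s _ | s].
    by apply/permP=> k'; rewrite permE /ulsf lift_perm_lift lift_perm_id liftK.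
  move/(s _ =P _) => si0; apply/permP=> k.
  case: (unliftP i k) => [k'|] ->; rewrite ?lift_perm_id //.
  by rewrite lift_perm_lift -si0 permE ulsfK.
by apply: eq_bigl => p; rewrite lift_perm_id eqxx.
Qed.

Lemma sum_perm_fiber (V : nmodType) n (i : 'I_n.+1) (Phi : 'I_n.+1 -> V) :
  \sum_(t : 'S_n.+1) Phi (t i) = (\sum_b Phi b) *+ n`!.
Proof.
rewrite -sumrMnl (partition_big (fun t : 'S_n.+1 => t i) predT) //.
apply: eq_bigr => b _.
rewrite (eq_bigl (fun t : 'S_n.+1 => t i == b)) //.
rewrite (eq_bigr (fun _ => Phi b)); last by move=> t /eqP ->.
by rewrite sum_lift_perm sumr_const card_Sn.
Qed.

Lemma sum_perm_fiber_nat n (i : 'I_n.+1) (Phi : 'I_n.+1 -> nat) :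
  (\sum_(t : 'S_n.+1) Phi (t i) = (\sum_b Phi b) * n`!)%N.
Proof.
rewrite big_distrl (partition_big (fun t : 'S_n.+1 => t i) predT) //=.
apply: eq_bigr => b _.
rewrite (eq_bigl (fun t : 'S_n.+1 => t i == b)) //.
rewrite (eq_bigr (fun _ => Phi b)); last by move=> t /eqP ->.
by rewrite sum_lift_perm sum_nat_const card_Sn mulnC.
Qed.

Lemma sum_perm_to0 (V : nmodType) n (b : 'I_n.+1) (H : 'S_n.+2 -> V) :
  \sum_(s : 'S_n.+2 | s (lift ord0 b) == ord0) H s =
  \sum_(r : 'S_n.+1) H (tperm ord0 (lift ord0 b) * lift_perm ord0 ord0 r)%g.
Proof.
rewrite (reindex_inj (mulgI (tperm ord0 (lift ord0 b)))) /=.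
rewrite (eq_bigl (fun s : 'S_n.+2 => s ord0 == ord0)); last first.
  by move=> s; rewrite permM tpermR.
by rewrite (sum_lift_perm _ _ _ (fun s => H (tperm ord0 (lift ord0 b) * s)%g)).
Qed.

Lemma sum_perm_at (V : nmodType) n (b j : 'I_n.+1) (H : 'S_n.+1 -> V) :
  \sum_(s : 'S_n.+1 | s b == j) H s =
  \sum_(p : 'S_n) H (lift_perm b b p * tperm b j)%g.
Proof.
rewrite (reindex_inj (mulIg (tperm b j))) /=.
rewrite (eq_bigl (fun s : 'S_n.+1 => s b == b)); last first.
  move=> s; rewrite permM; apply/eqP/eqP => [|->]; last by rewrite tpermL.
  by move/(congr1 (tperm b j)); rewrite tpermK tpermR.
by rewrite (sum_lift_perm _ _ _ (fun s => H (s * tperm b j)%g)).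
Qed.

End Perms.

Section PLemmas.
Variable C : numClosedFieldType.
Variable d : nat.
Local Notation midx := (midx d).
Local Notation Op := (@Op C d).
Local Notation ent := (@ent C d).

Definition fcmp n (y : midx n) (s : 'S_n) : midx n := [ffun k => y (s k)].

Lemma ent_Pi n (s : 'S_n) y u : ent (Pi C d s) y u = (u == fcmp y s)%:R.
Proof.
rewrite /Pi ent_mkop; suff -> : (y == [ffun k => u (s^-1%g k)]) = (u == fcmp y s) by [].
apply/idP/idP => /eqP ->.
  by apply/eqP/ffunP => k; rewrite !ffunE permK.
by apply/eqP/ffunP => k; rewrite !ffunE permKV.
Qed.

Lemma sum_Pi n (s : 'S_n) (g : midx n -> C) y :
  \sum_u ent (Pi C d s) y u * g u = g (fcmp y s).
Proof.
rewrite (bigD1 (fcmp y s)) //= ent_Pi eqxx mul1r big1 ?addr0 // => u /negbTE.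
by rewrite ent_Pi => ->; rewrite mul0r.
Qed.

Lemma sum_Pbeta N (hN : (0 < N)%N) (beta : 'I_N -> C) (g : midx N -> C) y :
  \sum_u ent (Pbeta d hN beta) y u * g u =
  (N`!%:R)^-1 * \sum_(s : 'S_N) beta (s (Ordinal hN)) * g (fcmp y s).
Proof.
under eq_bigr => u _ do rewrite /Pbeta ent_scale ent_sum -mulrA big_distrl /=.
rewrite -big_distrr /= exchange_big /=; congr (_ * _); apply: eq_bigr => s _.
rewrite -sum_Pi big_distrr /=; apply: eq_bigr => u _.
by rewrite ent_scale mulrA.
Qed.

Lemma ent_PAP N (hN : (0 < N)%N) (beta : 'I_N -> C) (A : Op N) y x :
  ent (Pbeta d hN beta *m A *m (Pbeta d hN beta)^T) y x =
  (N`!%:R)^-1 * (N`!%:R)^-1 * \sum_(s : 'S_N) \sum_(t : 'S_N)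
     beta (s (Ordinal hN)) * beta (t (Ordinal hN)) * ent A (fcmp y s) (fcmp x t).
Proof.
rewrite ent_mul.
under eq_bigr => z _ do rewrite ent_tr ent_mul mulrC.
rewrite sum_Pbeta.
under eq_bigr => t _ do rewrite sum_Pbeta.
rewrite -mulrA; congr (_ * _).
rewrite exchange_big big_distrr /=; apply: eq_bigr => t _.
rewrite mulrCA; congr (_ * _); rewrite big_distrr /=; apply: eq_bigr => s _.
by rewrite mulrCA mulrA.
Qed.

Lemma ent_ampI N (hN : (0 < N)%N) (rho : 'M[C]_d) y x :
  ent (ampI hN rho) y x =
  rho (y (Ordinal hN)) (x (Ordinal hN)) *
  [forall k : 'I_N, (k != Ordinal hN) ==> (y k == x k)]%:R.
Proof. by rewrite /ampI ent_mkop. Qed.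

End PLemmas.

Section Choi.
Variable C : numClosedFieldType.
Variable d : nat.
Local Notation midx := (midx d).
Local Notation Op := (@Op C d).
Local Notation ent := (@ent C d).

Lemma forall_perm n (t : 'S_n) (Q : pred 'I_n) :
  [forall k, Q (t k)] = [forall m, Q m].
Proof.
apply/forallP/forallP => H m; last exact: H.
by have := H (t^-1 m)%g; rewrite permKV.
Qed.

Lemma ent_choi n (T : 'M[C]_d -> Op n) (Y X : midx n.+1) :
  ent (choi T) Y X = ent (T (delta_mx (Y ord0) (X ord0))) (mtail Y) (mtail X).
Proof.
rewrite /choi ent_sum.
under eq_bigr => i _ do (rewrite ent_sum; under eq_bigr => j _ do rewrite /tens0 ent_mkop mxE).
rewrite (bigD1 (Y ord0)) //= (bigD1 (X ord0)) //= !eqxx mul1r.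
rewrite big1 ?addr0; last by move=> j /negbTE ne; rewrite eq_sym ne mul0r.
rewrite big1 ?addr0 // => i /negbTE ne; rewrite big1 // => j _.
by rewrite eq_sym ne mul0r.
Qed.

Lemma ent_ptrans0 n (A : Op n.+1) Y X :
  ent (ptrans0 A) Y X =
  ent A [ffun k => if k == ord0 then X ord0 else Y k]
        [ffun k => if k == ord0 then Y ord0 else X k].
Proof. by rewrite /ptrans0 ent_mkop. Qed.

Lemma lift0_eq0 n (k : 'I_n) : (lift ord0 k == ord0 :> 'I_n.+1) = false.
Proof. by apply/negbTE; rewrite eq_sym neq_lift. Qed.

Lemma ptrans_Pi_bool n (b : 'I_n.+1) (r : 'S_n.+1) (Y X : midx n.+2) :
  ([ffun k => if k == ord0 then Y ord0 else X k] ==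
   fcmp [ffun k => if k == ord0 then X ord0 else Y k]
        (tperm ord0 (lift ord0 b) * lift_perm ord0 ord0 r)%g) =
  [&& mtail Y (r b) == Y ord0, mtail X b == X ord0 &
      [forall m, (m != b) ==> (mtail Y (r m) == mtail X m)]].
Proof.
set s := (tperm ord0 (lift ord0 b) * lift_perm ord0 ord0 r)%g.
have s0 : s ord0 = lift ord0 (r b) by rewrite permM tpermL lift_perm_lift.
have sb : s (lift ord0 b) = ord0 by rewrite permM tpermR lift_perm_id.
have sk k : k != b -> s (lift ord0 k) = lift ord0 (r k).
  move=> nkb; rewrite permM tpermD ?lift_perm_lift //.
    by rewrite (inj_eq (@lift_inj _ _)) eq_sym.
apply/eqP/and3P => [H|[/eqP e1 /eqP e2 /forallP e3]].
  split.
  - have := congr1 (fun f : midx n.+2 => f ord0) H; rewrite /= !ffunE eqxx s0.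
    by rewrite /mtail ?ffunE lift0_eq0 => ->.
  - have := congr1 (fun f : midx n.+2 => f (lift ord0 b)) H; rewrite /= !ffunE sb eqxx.
    by rewrite lift0_eq0 /mtail ?ffunE => ->.
  - apply/forallP => m; apply/implyP => nmb.
    have := congr1 (fun f : midx n.+2 => f (lift ord0 m)) H; rewrite /= !ffunE sk //.
    by rewrite !lift0_eq0 /mtail ?ffunE => ->.
apply/ffunP => k; rewrite !ffunE.
case: (unliftP ord0 k) => [m|] ->.
  rewrite lift0_eq0.
  case: (eqVneq m b) => [->|nmb]; first by rewrite sb eqxx -e2 /mtail ?ffunE.
  rewrite sk // lift0_eq0.
  by have := implyP (e3 m) nmb; rewrite /mtail ?ffunE => /eqP ->.
by rewrite eqxx s0 lift0_eq0 -e1 /mtail ?ffunE.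
Qed.

End Choi.

Lemma sum_ab_perm (V : nmodType) n (b : 'I_n.+1) (f : 'I_n.+1 -> 'S_n.+2 -> V) :
  \sum_a \sum_(s : 'S_n.+2 | (s ord0 == lift ord0 a) && (s (lift ord0 b) == ord0)) f a s
  = \sum_(r : 'S_n.+1) f (r b) (tperm ord0 (lift ord0 b) * lift_perm ord0 ord0 r)%g.
Proof.
transitivity (\sum_(s : 'S_n.+2 | s (lift ord0 b) == ord0)
                \sum_a (if s ord0 == lift ord0 a then f a s else 0)).
  rewrite [RHS]big_mkcond /=.
  under eq_bigr => a _ do rewrite big_mkcond /=.
  rewrite exchange_big /=; apply: eq_bigr => s _.
  case: (s (lift ord0 b) == ord0) => /=.
    by apply: eq_bigr => a _; rewrite andbT.
  by rewrite big1 // => a _; rewrite andbF.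
rewrite sum_perm_to0; apply: eq_bigr => r _.
rewrite (bigD1 (r b)) //= permM tpermL lift_perm_lift eqxx big1 ?addr0 //.
by move=> a nab; rewrite (inj_eq (@lift_inj _ _)) eq_sym (negbTE nab).
Qed.

Section ChoiMain.
Variable C : numClosedFieldType.
Variable d : nat.
Local Notation midx := (midx d).
Local Notation Op := (@Op C d).
Local Notation ent := (@ent C d).

Lemma boolR_and (a b : bool) : ((a && b)%:R : C) = a%:R * b%:R.
Proof. by case: a; case: b; rewrite ?mul1r ?mul0r. Qed.

Lemma coef_choi n (hd : (0 < d)%N) :
  ((d * n.+1 * (n.+1 + d - 1))%:R / ('C(n.+1 + d - 1, n.+1))%:R : C) *
    (((n.+1)`!%:R)^-1 * ((n.+1)`!%:R)^-1 * n`!%:R) =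
  (d%:R / ('C(n.+1 + d - 1, n.+1))%:R * ((n.+1 + d - 1)%:R / n.+1%:R)) / n`!%:R.
Proof.
have hB : ('C(n.+1 + d - 1, n.+1)%:R : C) != 0.
  by rewrite pnatr_eq0 -lt0n bin_gt0; lia.
have hF : (n`!%:R : C) != 0 by rewrite pnatr_eq0 -lt0n fact_gt0.
have hn : (n.+1%:R : C) != 0 by rewrite pnatr_eq0.
rewrite factS !natrM; field.
by rewrite hB hF addrC natr1 hn.
Qed.

Lemma choi_eq n (hd : (0 < d)%N) (hN : (0 < n.+1)%N) (beta : 'I_n.+1 -> C) :
  choi (Tbeta d hN beta) = Cbeta d beta.
Proof.
apply: op_ext => Y X.
rewrite ent_choi /Tbeta ent_scale ent_PAP.
set y := mtail Y; set x := mtail X.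
set o := Ordinal hN.
pose Z (r : 'S_n.+1) b := [&& y (r b) == Y ord0, x b == X ord0 &
      [forall m, (m != b) ==> (y (r m) == x m)]].
pose G b := \sum_(r : 'S_n.+1) beta (r b) * beta b * (Z r b)%:R.
have -> : \sum_(s : 'S_n.+1) \sum_(t : 'S_n.+1)
   beta (s o) * beta (t o) *
   ent (ampI hN (delta_mx (Y ord0) (X ord0))) (fcmp y s) (fcmp x t)
   = (\sum_b G b) *+ n`!.
  rewrite exchange_big /= -(sum_perm_fiber o G); apply: eq_bigr => t _.
  rewrite (reindex_inj (mulgI t)) /=; apply: eq_bigr => r _.
  rewrite ent_ampI mxE !ffunE !permM /Z !boolR_and -!mulrA; congr (_ * (_ * _)).
  have -> : [forall k, (k != o) ==> (fcmp y (t * r)%g k == fcmp x t k)] =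
            [forall m, (m != t o) ==> (y (r m) == x m)].
    rewrite -(forall_perm t (fun m => (m != t o) ==> (y (r m) == x m))).
    apply: eq_forallb => k /=.
    by rewrite !ffunE permM (inj_eq perm_inj).
  by rewrite /y /x /mtail !ffunE.
have -> : ent (Cbeta d beta) Y X =
    (d%:R / ('C(n.+1 + d - 1, n.+1))%:R * ((n.+1 + d - 1)%:R / n.+1%:R)) *
    ((n`!%:R)^-1 * \sum_b G b).
  rewrite /Cbeta ent_scale ent_sum; congr (_ * _).
  under eq_bigr => a _ do rewrite ent_sum.
  under eq_bigr => a _ do under eq_bigr => b _ do rewrite ent_sum.
  rewrite exchange_big /=.
  under eq_bigr => b _ do rewrite (sum_ab_perm b (fun a s =>
     ent ((beta a * beta b / (n.+1).-1`!%:R) *: ptrans0 (Pi C d s)) Y X)).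
  rewrite big_distrr /=; apply: eq_bigr => b _.
  rewrite big_distrr /=; apply: eq_bigr => r _.
  rewrite ent_scale ent_ptrans0 ent_Pi ptrans_Pi_bool /=.
  by rewrite /Z /y /x; ring.
transitivity (((d * n.+1 * (n.+1 + d - 1))%:R / ('C(n.+1 + d - 1, n.+1))%:R *
  (((n.+1)`!%:R)^-1 * ((n.+1)`!%:R)^-1 * n`!%:R)) * \sum_b G b).
  by rewrite -mulr_natr; ring.
by rewrite (coef_choi n hd); ring.
Qed.

End ChoiMain.

Section Count.
Variable d : nat.
Local Notation fn n := {ffun 'I_n -> 'I_d}.

Definition fixb n (r : 'S_n) (y : fn n) := [forall m, y (r m) == y m].

Definition Fixn n (r : 'S_n) := (\sum_(y : fn n) fixb r y)%N.

Definition Gn n := (\sum_(r : 'S_n) Fixn r)%N.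

Lemma pigeon n (r : 'S_n) (y : fn n) b :
  (forall m, m != b -> y (r m) = y m) -> y (r b) = y b.
Proof.
move=> H.
have E : (\sum_m (y (r m) == y b) = \sum_m (y m == y b))%N.
  by rewrite [RHS](reindex_inj (@perm_inj _ r)).
move: E; rewrite (bigD1 b) //= [X in _ = X](bigD1 b) //= eqxx.
rewrite (eq_bigr (fun m => (y m == y b) : nat)); last by move=> m /H ->.
by move/addIn; case: eqP.
Qed.

Lemma fix_forall n (r : 'S_n) (y : fn n) b :
  [forall m, (m != b) ==> (y (r m) == y m)] = fixb r y.
Proof.
apply/forallP/forallP => H m; last by apply/implyP.
case: (eqVneq m b) => [->|nmb]; last by have := H m; rewrite nmb.
apply/eqP/pigeon => k nkb; by have := H k; rewrite nkb => /eqP.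
Qed.

Definition ins n (b : 'I_n.+1) (v : 'I_d) (y : fn n) : fn n.+1 :=
  [ffun m => if unlift b m is Some k then y k else v].

Lemma ins_b n b v (y : fn n) : ins b v y b = v.
Proof. by rewrite ffunE unlift_none. Qed.

Lemma ins_lift n b v (y : fn n) k : ins b v y (lift b k) = y k.
Proof. by rewrite ffunE liftK. Qed.

Lemma sum_ins (V : nmodType) n (b : 'I_n.+1) (F : fn n.+1 -> V) :
  \sum_(y : fn n.+1) F y = \sum_(y : fn n) \sum_(v : 'I_d) F (ins b v y).
Proof.
rewrite pair_big /=.
rewrite (reindex (fun p : fn n * 'I_d => ins b p.2 p.1)) //.
exists (fun y : fn n.+1 => ([ffun k => y (lift b k)], y b)) => [[y v] _|y _] /=.
  by congr (_, _); [apply/ffunP => k; rewrite !ffunE liftK | rewrite ins_b].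
apply/ffunP => m; rewrite ffunE.
by case: (unliftP b m) => [k|] ->; rewrite ?ffunE.
Qed.

Lemma fixb_tperm n (y : fn n) b j z : y j = y b -> y (tperm b j z) = y z.
Proof. by move=> e; case: tpermP => [->|->|]. Qed.

Lemma fix_decomp n (p : 'S_n) (b j : 'I_n.+1) (y : fn n) v :
  fixb (lift_perm b b p * tperm b j)%g (ins b v y) =
  fixb p y && (if unlift b j is Some j0 then y j0 == v else true).
Proof.
set Y := ins b v y.
have eYj : (Y j == Y b) = (if unlift b j is Some j0 then y j0 == v else true).
  by rewrite /Y ins_b ffunE; case: (unlift b j) => [k|]; rewrite ?eqxx.
have L : fixb (lift_perm b b p) Y = fixb p y.
  apply/forallP/forallP => H m.
    by have := H (lift b m); rewrite lift_perm_lift !ins_lift.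
  case: (unliftP b m) => [k|] ->; first by rewrite lift_perm_lift !ins_lift.
  by rewrite lift_perm_id.
rewrite -eYj -L; apply/idP/andP => [H|[H /eqP e]].
  have e : Y j = Y b.
    by have := forallP H b; rewrite permM lift_perm_id tpermL => /eqP.
  split; last by rewrite e.
  apply/forallP => m; have := forallP H m.
  by rewrite permM fixb_tperm.
apply/forallP => m; rewrite permM fixb_tperm //; exact: forallP H m.
Qed.

Lemma Fixn_decomp n (p : 'S_n) (b j : 'I_n.+1) :
  Fixn (lift_perm b b p * tperm b j)%g = (Fixn p * (if j == b then d else 1))%N.
Proof.
rewrite /Fixn (sum_ins b) big_distrl /=; apply: eq_bigr => y _.
under eq_bigr => v _ do rewrite fix_decomp.
case: (eqVneq j b) => [->|njb].
  rewrite unlift_none; under eq_bigr => v _ do rewrite andbT.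
  by rewrite sum_nat_const card_ord mulnC.
have nbj : b != j by rewrite eq_sym.
case: (unlift_some nbj) => j0 _ ->.
case: (fixb p y) => /=; last by rewrite big1.
by rewrite (bigD1 (y j0)) //= eqxx big1 // => v; rewrite eq_sym => /negbTE ->.
Qed.

Lemma Gn_rec n : Gn n.+1 = (Gn n * (d + n))%N.
Proof.
rewrite /Gn (partition_big (fun r : 'S_n.+1 => r ord0) predT) //=.
under eq_bigr => j _ do rewrite (eq_bigl (fun r : 'S_n.+1 => r ord0 == j)) //.
under eq_bigr => j _ do rewrite (sum_perm_at ord0 j (fun r => (Fixn r : nat))).
under eq_bigr => j _ do under eq_bigr => p _ do rewrite Fixn_decomp.
under eq_bigr => j _ do rewrite -big_distrl /=.
rewrite -big_distrr /=; congr (_ * _)%N.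
rewrite (bigD1 ord0) //= ?eqxx (eq_bigr (fun _ => 1%N)); last first.
  by move=> j /negbTE ->.
rewrite sum_nat_const /= cardC1 card_ord muln1; lia.
Qed.

Lemma Gn_val n : (0 < d)%N -> Gn n = (n`! * 'C(n + d - 1, n))%N.
Proof.
move=> hd; elim: n => [|n IH].
  rewrite /Gn (eq_bigr (fun _ => 1%N)) ?sum_nat_const ?card_Sn ?bin0 //.
  move=> r _; rewrite /Fixn (eq_bigr (fun _ => 1%N)) ?sum_nat_const ?card_ffun ?card_ord //.
  by move=> y _; rewrite (_ : fixb r y = true) //; apply/forallP => -[].
rewrite Gn_rec IH factS.
have := mul_bin_diag (n + d) n.
have -> : (n + d).-1 = (n + d - 1)%N by lia.
have -> : (n.+1 + d - 1 = n + d)%N by lia.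
move=> h; nia.
Qed.

Lemma sum_eq_pick (V : nmodType) (u : 'I_d) (F : 'I_d -> V) :
  \sum_v (if u == v then F v else 0) = F u.
Proof.
rewrite (bigD1 u) //= eqxx big1 ?addr0 // => v nv.
by rewrite eq_sym (negbTE nv).
Qed.

Lemma color_sym (C : numClosedFieldType) n (p : 'S_n) (j0 : 'I_n) (f : 'I_d -> C) :
  d%:R * \sum_(y : fn n) (fixb p y)%:R * f (y j0) = (\sum_v f v) * (Fixn p)%:R.
Proof.
pose cnt v := (\sum_(y : fn n) (fixb p y && (y j0 == v)))%N.
have E y : (fixb p y)%:R * f (y j0) = \sum_v (fixb p y && (y j0 == v))%:R * f v.
  rewrite (bigD1 (y j0)) //= eqxx andbT big1 ?addr0 // => v nv.
  by rewrite eq_sym (negbTE nv) andbF mul0r.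
rewrite (eq_bigr _ (fun y _ => E y)) exchange_big /=.
have cntE v w : cnt v = cnt w.
  pose h (y : fn n) : fn n := [ffun k => tperm v w (y k)].
  have hK : involutive h by move=> y; apply/ffunP => k; rewrite !ffunE tpermK.
  rewrite /cnt [in RHS](reindex_inj (inv_inj hK)); apply: eq_bigr => y _.
  congr (nat_of_bool _); congr andb.
    by apply: eq_forallb => m; rewrite !ffunE (inj_eq perm_inj).
  rewrite ffunE; apply/eqP/eqP => [->|e]; first by rewrite tpermL.
  by rewrite -(tpermK v w (y j0)) e tpermR.
have -> : \sum_v \sum_(y : fn n) (fixb p y && (y j0 == v))%:R * f v =
          \sum_v (cnt v)%:R * f v :> C.
  by apply: eq_bigr => v _; rewrite /cnt natr_sum big_distrl.
transitivity (\sum_(w < d) \sum_v (cnt v)%:R * f v).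
  by rewrite sumr_const card_ord mulr_natl.
transitivity (\sum_(w < d) \sum_v (cnt w)%:R * f v).
  by apply: eq_bigr => w _; apply: eq_bigr => v _; rewrite (cntE v w).
rewrite exchange_big /= big_distrl /=; apply: eq_bigr => v _.
rewrite -big_distrl /= mulrC; congr (_ * _).
rewrite -natr_sum /cnt /Fixn exchange_big /=; congr (_ %:R).
apply: eq_bigr => y _.
case: (fixb p y) => /=; last by rewrite big1.
by rewrite (bigD1 (y j0)) //= eqxx big1 // => w; rewrite eq_sym => /negbTE ->.
Qed.

End Count.

Section Trace.
Variable C : numClosedFieldType.
Variable d : nat.
Hypothesis hd : (0 < d)%N.
Local Notation fn n := {ffun 'I_n -> 'I_d}.
Local Notation ent := (@ent C d).

Lemma dR_neq0 : (d%:R : C) != 0.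
Proof. by rewrite pnatr_eq0 -lt0n. Qed.

Lemma inner_fix n (b j : 'I_n.+1) (p : 'S_n) (X : 'M[C]_d) :
  \sum_(y : fn n.+1) X (y b) (y b) * (fixb (lift_perm b b p * tperm b j)%g y)%:R
  = \tr X * (Fixn d p)%:R * (if j == b then 1 else d%:R^-1).
Proof.
rewrite (sum_ins b).
under eq_bigr => y _ do under eq_bigr => v _ do rewrite ins_b fix_decomp.
case: (eqVneq j b) => [ejb|njb].
  subst j.
  rewrite unlift_none mulr1 /Fixn natr_sum big_distrr /=.
  apply: eq_bigr => y _; under eq_bigr => v _ do rewrite andbT.
  by rewrite -big_distrl /= mulrC.
have nbj : b != j by rewrite eq_sym.
case: (unlift_some nbj) => j0 _ ->.
have -> : \sum_(y : fn n) \sum_v X v v * (fixb p y && (y j0 == v))%:R =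
          \sum_(y : fn n) (fixb p y)%:R * X (y j0) (y j0).
  apply: eq_bigr => y _.
  rewrite (bigD1 (y j0)) //= eqxx andbT mulrC big1 ?addr0 // => v nv.
  by rewrite eq_sym (negbTE nv) andbF mulr0.
apply: (mulfI dR_neq0).
rewrite (color_sym p j0 (fun v => X v v)) /mxtrace.
by field; rewrite dR_neq0.
Qed.

Lemma beta_sum n (beta : 'I_n.+1 -> C) :
  (d%:R - 1) * (\sum_(i < n.+1) beta i ^+ 2) + (\sum_(i < n.+1) beta i) ^+ 2 = 1 ->
  \sum_b \sum_j beta j * beta b * (if j == b then 1 else d%:R^-1) = d%:R^-1.
Proof.
move=> hc.
have E j b : (if j == b then 1 else d%:R^-1 : C) =
             d%:R^-1 + (j == b)%:R * (1 - d%:R^-1).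
  by case: eqP => _; rewrite ?mul1r ?mul0r ?addr0 // addrC subrK.
under eq_bigr => b _ do under eq_bigr => j _ do rewrite E mulrDr.
under eq_bigr => b _ do rewrite big_split /=.
rewrite big_split /=.
have P1 : \sum_(b < n.+1) \sum_(j < n.+1) beta j * beta b * d%:R^-1 =
          (\sum_(i < n.+1) beta i) ^+ 2 * d%:R^-1.
  rewrite expr2 big_distrl /= big_distrl /=; apply: eq_bigr => b _.
  by rewrite -big_distrl -big_distrl /=; ring.
have P2 : \sum_(b < n.+1) \sum_(j < n.+1) beta j * beta b * ((j == b)%:R * (1 - d%:R^-1)) =
          (\sum_(i < n.+1) beta i ^+ 2) * (1 - d%:R^-1).
  rewrite big_distrl /=; apply: eq_bigr => b _.
  rewrite (bigD1 b) //= eqxx big1 ?addr0; first by rewrite mul1r expr2.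
  by move=> j /negbTE ->; rewrite mul0r mulr0.
rewrite P1 P2.
have hS : (\sum_(i < n.+1) beta i) ^+ 2 =
          1 - (d%:R - 1) * (\sum_(i < n.+1) beta i ^+ 2).
  by apply: (addrI ((d%:R - 1) * (\sum_(i < n.+1) beta i ^+ 2))); rewrite hc; ring.
rewrite hS; field; exact: dR_neq0.
Qed.

Lemma coef_tr n :
  ((d * n.+1 * (n.+1 + d - 1))%:R / ('C(n.+1 + d - 1, n.+1))%:R : C) *
    (((n.+1)`!%:R)^-1 * ((n.+1)`!%:R)^-1 * n`!%:R) *
    (n`! * 'C(n + d - 1, n))%:R * d%:R^-1 = 1.
Proof.
have -> : (n.+1 + d - 1 = n + d)%N by lia.
have h := mul_bin_diag (n + d) n.
have e : (n + d).-1 = (n + d - 1)%N by lia.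
rewrite e in h.
have hnd : ((n + d)%:R : C) != 0 by rewrite pnatr_eq0; lia.
have hC : ('C(n + d - 1, n)%:R : C) = n.+1%:R * 'C(n + d, n.+1)%:R / (n + d)%:R.
  have hh : ((n + d)%:R * 'C(n + d - 1, n)%:R = n.+1%:R * 'C(n + d, n.+1)%:R :> C).
    by rewrite -!natrM h.
  by rewrite -hh; field; rewrite -natrD.
have hB : ('C(n + d, n.+1)%:R : C) != 0.
  by rewrite pnatr_eq0 -lt0n bin_gt0; lia.
have hF : (n`!%:R : C) != 0 by rewrite pnatr_eq0 -lt0n fact_gt0.
have hn : (n.+1%:R : C) != 0 by rewrite pnatr_eq0.
rewrite factS !natrM hC; field.
by rewrite hB hF dR_neq0 -natrD hnd /= addrC natr1 hn.
Qed.

Lemma trace_T n (hN : (0 < n.+1)%N) (beta : 'I_n.+1 -> C) (X : 'M[C]_d) :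
  (d%:R - 1) * (\sum_(i < n.+1) beta i ^+ 2) + (\sum_(i < n.+1) beta i) ^+ 2 = 1 ->
  \tr (Tbeta d hN beta X) = \tr X.
Proof.
move=> hc.
rewrite /Tbeta mxtraceZ ent_trace.
under eq_bigr => y _ do rewrite ent_PAP.
rewrite -big_distrr /=.
set o := Ordinal hN.
pose H b := \sum_(r : 'S_n.+1) beta (r b) * beta b *
   \sum_(y : fn n.+1) X (y b) (y b) * (fixb r y)%:R.
have -> : \sum_(y : fn n.+1) \sum_(s : 'S_n.+1) \sum_(t : 'S_n.+1)
   beta (s o) * beta (t o) * ent (ampI hN X) (fcmp y s) (fcmp y t)
   = (\sum_b H b) *+ n`!.
  rewrite exchange_big /=.
  under eq_bigr => s _ do rewrite exchange_big /=.
  rewrite exchange_big /= -(sum_perm_fiber o H); apply: eq_bigr => t _.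
  rewrite (reindex_inj (mulgI t)) /=; apply: eq_bigr => r _.
  rewrite big_distrr /=; apply: eq_bigr => y _.
  rewrite ent_ampI !ffunE !permM.
  have -> : [forall k, (k != o) ==> (fcmp y (t * r)%g k == fcmp y t k)] = fixb r y.
    rewrite -(fix_forall r y (t o)).
    rewrite -(forall_perm t (fun m => (m != t o) ==> (y (r m) == y m))).
    apply: eq_forallb => k /=.
    by rewrite !ffunE permM (inj_eq perm_inj).
  case hf: (fixb r y); last by rewrite !mulr0.
  by have := forallP hf (t o) => /eqP ->.
have HE b : H b = \tr X * (Gn d n)%:R *
    \sum_j beta j * beta b * (if j == b then 1 else d%:R^-1).
  rewrite /H (partition_big (fun r : 'S_n.+1 => r b) predT) //=.
  under eq_bigr => j _ do rewrite (eq_bigl (fun r : 'S_n.+1 => r b == j)) //.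
  under eq_bigr => j _ do rewrite (sum_perm_at b j (fun r => beta (r b) * beta b *
     \sum_(y : fn n.+1) X (y b) (y b) * (fixb r y)%:R)).
  rewrite big_distrr /=; apply: eq_bigr => j _.
  under eq_bigr => p _ do rewrite inner_fix permM lift_perm_id tpermL.
  rewrite /Gn natr_sum mulrAC big_distrr /=; apply: eq_bigr => p _; set w := (if _ then _ else _); ring.
rewrite (eq_bigr _ (fun b _ => HE b)) -big_distrr /= beta_sum // Gn_val //.
rewrite -mulr_natr.
transitivity (\tr X * (((d * n.+1 * (n.+1 + d - 1))%:R / ('C(n.+1 + d - 1, n.+1))%:R : C) *
    (((n.+1)`!%:R)^-1 * ((n.+1)`!%:R)^-1 * n`!%:R) *
    (n`! * 'C(n + d - 1, n))%:R * d%:R^-1)).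
  ring.
by rewrite coef_tr mulr1.
Qed.

End Trace.

Section Psd.
Variable C : numClosedFieldType.

Lemma adjmxE m n (A : 'M[C]_(m, n)) i j : adjmx A i j = (A j i)^*.
Proof. by rewrite /adjmx !mxE. Qed.

Lemma adjmxM m n p (A : 'M[C]_(m, n)) (B : 'M[C]_(n, p)) :
  adjmx (A *m B) = adjmx B *m adjmx A.
Proof.
apply/matrixP => i j; rewrite adjmxE !mxE rmorph_sum /=.
by apply: eq_bigr => k _; rewrite rmorphM /= !adjmxE mulrC.
Qed.

Lemma adjmxK m n (A : 'M[C]_(m, n)) : adjmx (adjmx A) = A.
Proof. by apply/matrixP => i j; rewrite !adjmxE conjCK. Qed.

Lemma adjmxD m n (A B : 'M[C]_(m, n)) : adjmx (A + B) = adjmx A + adjmx B.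
Proof. by apply/matrixP => i j; rewrite /adjmx !mxE rmorphD. Qed.

Lemma adjmxZ m n a (A : 'M[C]_(m, n)) : adjmx (a *: A) = a^* *: adjmx A.
Proof. by apply/matrixP => i j; rewrite /adjmx !mxE rmorphM. Qed.

Lemma psd0 n : psd (0 : 'M[C]_n).
Proof.
split; first by apply/matrixP => i j; rewrite adjmxE !mxE rmorph0.
by move=> v; rewrite mulmx0 mul0mx mxE.
Qed.

Lemma psdD n (A B : 'M[C]_n) : psd A -> psd B -> psd (A + B).
Proof.
move=> [hA qA] [hB qB]; split; first by rewrite adjmxD hA hB.
by move=> v; rewrite mulmxDr mulmxDl mxE addr_ge0.
Qed.

Lemma psd_sum n I (r : seq I) (P : pred I) (F : I -> 'M[C]_n) :
  (forall i, P i -> psd (F i)) -> psd (\sum_(i <- r | P i) F i).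
Proof.
move=> H; elim/big_ind: _ => //; [exact: psd0 | exact: psdD].
Qed.

Lemma psdZ n (a : C) (A : 'M[C]_n) : 0 <= a -> psd A -> psd (a *: A).
Proof.
move=> ha [hA qA]; split.
  by rewrite adjmxZ hA conj_Creal // ger0_real.
by move=> v; rewrite -scalemxAr -scalemxAl mxE mulr_ge0.
Qed.

Lemma psd_congr m n (B : 'M[C]_(m, n)) (X : 'M[C]_n) :
  psd X -> psd (B *m X *m adjmx B).
Proof.
move=> [hX qX]; split; first by rewrite !adjmxM adjmxK hX mulmxA.
move=> v; have := qX (adjmx B *m v).
by rewrite adjmxM adjmxK !mulmxA.
Qed.

End Psd.

Lemma sum_mxtens (V : nmodType) m n (F : 'I_(m * n) -> V) :
  \sum_(a : 'I_(m * n)) F a =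
  \sum_(a1 : 'I_m) \sum_(a2 : 'I_n) F (mxtens_index (a1, a2)).
Proof.
rewrite pair_big /= (reindex (@mxtens_index m n)) /=.
  by apply: eq_bigr => -[a1 a2].
by exists (@mxtens_unindex m n) => a _; rewrite ?mxtens_indexK ?mxtens_unindexK.
Qed.

Section CP.
Variable C : numClosedFieldType.
Variable d : nat.
Local Notation fn n := {ffun 'I_n -> 'I_d}.
Local Notation ent := (@ent C d).

Lemma ins_agree n (b : 'I_n.+1) i j (w1 w2 : fn n) :
  [forall k, (k != b) ==> (ins b i w1 k == ins b j w2 k)] = (w1 == w2).
Proof.
apply/forallP/eqP => [H|<- k].
  apply/ffunP => k; have := H (lift b k).
  by rewrite !ins_lift eq_sym neq_lift => /eqP.
apply/implyP => nkb; have nbk : b != k by rewrite eq_sym.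
by case: (unlift_some nbk) => k0 -> _; rewrite !ins_lift.
Qed.

Lemma ent_kraus n (hN : (0 < n.+1)%N) (beta : 'I_n.+1 -> C) (M : 'M[C]_d) y x :
  ent (Pbeta d hN beta *m ampI hN M *m (Pbeta d hN beta)^T) y x =
  \sum_(w : fn n) \sum_i \sum_j
     ent (Pbeta d hN beta) y (ins (Ordinal hN) i w) * M i j *
     ent (Pbeta d hN beta) x (ins (Ordinal hN) j w).
Proof.
set P := Pbeta d hN beta; set o := Ordinal hN.
rewrite ent_mul.
under eq_bigr => z _ do rewrite ent_tr ent_mul big_distrl /=.
rewrite exchange_big /= (sum_ins o); apply: eq_bigr => w1 _.
apply: eq_bigr => i _; rewrite (sum_ins o).
rewrite (eq_bigr (fun w2 : fn n => \sum_j ent P y (ins o i w1) * M i j *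
    ent P x (ins o j w2) * (w1 == w2)%:R)); last first.
  move=> w2 _; apply: eq_bigr => j _; rewrite ent_ampI !ins_b ins_agree.
  by rewrite mulrA mulrAC -mulrA -[in RHS]mulrA [in RHS]mulrA.
rewrite (bigD1 w1) //= [X in _ + X]big1 ?addr0; last first.
  move=> w2 nw; rewrite big1 // => j _.
  by rewrite eq_sym (negbTE nw) mulr0.
by apply: eq_bigr => j _; rewrite eqxx mulr1.
Qed.

Lemma P_real n (hN : (0 < n.+1)%N) (beta : 'I_n.+1 -> C) y u :
  (forall i, beta i \is Num.real) -> ent (Pbeta d hN beta) y u \is Num.real.
Proof.
move=> hb; rewrite /Pbeta ent_scale ent_sum.
rewrite rpredM ?rpredV ?rpred_nat // rpred_sum // => s _.
by rewrite ent_scale ent_Pi rpredM ?rpred_nat.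
Qed.

Lemma entE n (A : Op C d n) r s : A r s = ent A (enum_val r) (enum_val s).
Proof. by rewrite /ent !enum_valK. Qed.

Definition Kr n (hN : (0 < n.+1)%N) (beta : 'I_n.+1 -> C) k (w : fn n) :
    'M[C]_(k * #|{: midx d n.+1}|, k * d) :=
  \matrix_(p, a) (((mxtens_unindex p).1 == (mxtens_unindex a).1)%:R *
    ent (Pbeta d hN beta) (enum_val (mxtens_unindex p).2)
        (ins (Ordinal hN) (mxtens_unindex a).2 w)).

Lemma KrE n (hN : (0 < n.+1)%N) (beta : 'I_n.+1 -> C) k (w : fn n) p a :
  Kr hN beta k w p a = (((mxtens_unindex p).1 == (mxtens_unindex a).1)%:R *
    ent (Pbeta d hN beta) (enum_val (mxtens_unindex p).2)
        (ins (Ordinal hN) (mxtens_unindex a).2 w)).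
Proof. by rewrite mxE. Qed.

Lemma ampl_kraus n (hN : (0 < n.+1)%N) (beta : 'I_n.+1 -> C) k (X : 'M[C]_(k * d)) :
  (forall i, beta i \is Num.real) ->
  ampl (Tbeta d hN beta) X =
  ((d * n.+1 * (n.+1 + d - 1))%:R / ('C(n.+1 + d - 1, n.+1))%:R) *:
    \sum_(w : fn n) (Kr hN beta k w *m X *m adjmx (Kr hN beta k w)).
Proof.
move=> hb; apply/matrixP => p q.
rewrite /ampl mxE /Tbeta [LHS]mxE [RHS]mxE summxE; congr (_ * _).
rewrite entE ent_kraus; apply: eq_bigr => w _.
rewrite mxE sum_mxtens (bigD1 (mxtens_unindex q).1) //= [X in _ + X]big1 ?addr0;
  last first.
  move=> b1 nb; rewrite big1 // => b2 _.
  by rewrite adjmxE KrE mxtens_indexK /= eq_sym (negbTE nb) mul0r rmorph0 mulr0.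
rewrite exchange_big /=; apply: eq_bigr => j _.
rewrite adjmxE KrE mxtens_indexK eqxx mul1r conj_Creal ?P_real //.
rewrite mxE sum_mxtens (bigD1 (mxtens_unindex p).1) //= [X in _ + X]big1 ?addr0;
  last first.
  move=> a1 na; rewrite big1 // => a2 _.
  by rewrite KrE mxtens_indexK eq_sym (negbTE na) !mul0r.
rewrite big_distrl /=; apply: eq_bigr => i _.
by rewrite KrE mxtens_indexK eqxx mul1r mxE.
Qed.

Lemma cp_T n (hN : (0 < n.+1)%N) (beta : 'I_n.+1 -> C) :
  (forall i, beta i \is Num.real) -> completely_positive (Tbeta d hN beta).
Proof.
move=> hb k X hX; rewrite ampl_kraus //.
apply: psdZ; first by rewrite divr_ge0 ?ler0n.
by apply: psd_sum => w _; apply: psd_congr.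
Qed.

Lemma ampI_lin n (hN : (0 < n.+1)%N) a (X Y : 'M[C]_d) :
  ampI hN (a *: X + Y) = a *: ampI hN X + ampI hN Y.
Proof.
apply: op_ext => y x; rewrite ent_add ent_scale !ent_ampI !mxE.
by rewrite mulrDl mulrA.
Qed.

Lemma lin_T n (hN : (0 < n.+1)%N) (beta : 'I_n.+1 -> C) :
  linear_map (Tbeta d hN beta).
Proof.
move=> a X Y; rewrite /Tbeta ampI_lin mulmxDr mulmxDl -scalemxAr -scalemxAl.
by rewrite scalerDr !scalerA mulrC.
Qed.

End CP.


Unset Implicit Arguments.

Theorem mainTheorem13 (C : numClosedFieldType) (d N : nat)
  (hd : (2 <= d)%N) (hN : (0 < N)%N) (beta : 'I_N -> C) :
  (forall i, beta i \is Num.real) ->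
  (d%:R - 1) * (\sum_(i < N) beta i ^+ 2) + (\sum_(i < N) beta i) ^+ 2 = 1 ->
  quantum_channel (Tbeta d hN beta) /\ choi (Tbeta d hN beta) = Cbeta d beta.
Proof.
move=> hb hc.
have hd1 : (0 < d)%N by apply: leq_trans hd.
case: N hN beta hb hc => [//|n] hN beta hb hc.
split; first split.
- exact: lin_T.
- exact: cp_T.
- by move=> X; apply: trace_T.
- exact: choi_eq.
Qed.
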